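(* Let $K$ be a field, $c\in K\setminus\{0\}$, $n\ge1$, let $f$ be a $c$-frieze of order $n$ over $K$, and put $s=f(0,n)$, $t=f(1,n+1)$. Then for every integer $k$ with $0\le k\le n$ and every $i\in\mathbb{Z}$: (a) $f(2i,2i+k-1)=\dfrac{f(2i-1,2i+k-1)\,f(2i,2i+n-1)}{t}+\dfrac{f(2i-2,2i+k-1)}{c}$; (b) $f(2i+1,2i+k)=\dfrac{f(2i,2i+k)\,f(2i+1,2i+n)}{s}+\dfrac{f(2i-1,2i+k)}{c}$.
   Context: The $c$-continuant polynomials $P_k=P_k^c$ ($k\ge-1$) are defined by $P_{-1}=0$, $P_0=1$, and for $k\ge1$, $P_k(x_1,\dots,x_k)=x_kP_{k-1}(x_1,\dots,x_{k-1})+cP_{k-2}(x_1,\dots,x_{k-2})$. A family $(x_i)_{i\in\mathbb{Z}}$ in $K$ is $n$-admissible if $P_{n+2}(x_i,\dots,x_{i+n+1})=0$ for all $i$. Let $\mathbb{B}_n=\{(i,j)\in\mathbb{Z}^2:-2\le j-i\le n+1\}$. A $c$-frieze of order $n$ is a function $f:\mathbb{B}_n\to K$ for which there is an $n$-admissible family $(x_i)$ with $f(i,j)=P_{j-i+1}(x_i,\dots,x_j)$ for all $(i,j)\in\mathbb{B}_n$. It is known that $f(2i,2i+n)=s$, $f(2i+1,2i+n+1)=t$ for all $i$ and $st=(-c)^{n+1}$, so $s,t\neq0$. *)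

(* Defs.v *)
From HB Require Import structures.
From mathcomp Require Import all_boot all_order all_algebra.
Set Implicit Arguments. Unset Strict Implicit. Unset Printing Implicit Defensive.
Import Order.TTheory GRing.Theory Num.Theory.
Local Open Scope ring_scope.

(* cont c x i k = P_k^c(x_i, ..., x_{i+k-1}) for k >= 0 *)
Fixpoint cont (K : fieldType) (c : K) (x : int -> K) (i : int) (k : nat) : K :=
  match k with
  | 0%N => 1
  | 1%N => x i
  | (k1.+1 as k2).+1 => x (i + k2%:Z) * cont c x i k2 + c * cont c x i k1
  end.

(* contZ c x i m = P_m^c(x_i, ..., x_{i+m-1}) for m >= -1 (P_{-1} = 0) *)
Definition contZ (K : fieldType) (c : K) (x : int -> K) (i : int) (m : int) : K :=
  match m with
  | Posz k => cont c x i k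
  | Negz _ => 0
  end.

Definition admissible (K : fieldType) (c : K) (n : nat) (x : int -> K) : Prop :=
  forall i : int, cont c x i n.+2 = 0.

Definition inB (n : nat) (i j : int) : Prop := -2 <= j - i <= n.+1%:Z.

(* f is a c-frieze of order n (only its values on B_n matter) *)
Definition is_frieze (K : fieldType) (c : K) (n : nat) (f : int -> int -> K) : Prop :=
  exists x : int -> K, admissible c n x /\
    forall i j : int, inB n i j -> f i j = contZ c x i (j - i + 1).

(* Main.v *)
Require Import Defs.
From HB Require Import structures.
From mathcomp Require Import all_boot all_order all_algebra.
From mathcomp Require Import zify ring.
Import Order.TTheory GRing.Theory Num.Theory.
Local Open Scope ring_scope.

Section S.
Variables (K : fieldType) (c : K) (x : int -> K).
Local Notation M := (cont c x).

Lemma contS i k : M i k.+2 = x (i + k.+1%:Z) * M i k.+1 + c * M i k.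
Proof. by []. Qed.

Lemma contL_aux k : forall i,
  (M i k.+2 = x i * M (i+1) k.+1 + c * M (i+2) k) /\
  (M i k.+3 = x i * M (i+1) k.+2 + c * M (i+2) k.+1).
Proof.
elim: k => [|k IH] i; last have [IH1 IH2] := IH i.
  split.
    rewrite contS /=; have -> : i + 1%:Z = i + 1 by [].
    by rewrite mulrC mulr1.
  rewrite /= .
  have -> : i + 1 + 1%:Z = i + 2%:Z by lia.
  have -> : i + 1%:Z = i + 1 by [].
  have -> : (i + 2) = i + 2%:Z by [].
  ring.
split; first exact: IH2.
rewrite contS IH2 IH1 (contS (i+1) k.+1) (contS (i+2) k).
have -> : i + 1 + k.+2%:Z = i + k.+3%:Z by lia.
have -> : i + 2 + k.+1%:Z = i + k.+3%:Z by lia.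
ring.
Qed.

Lemma contL i k : M i k.+2 = x i * M (i+1) k.+1 + c * M (i+2) k.
Proof. exact: (proj1 (contL_aux k i)). Qed.

Lemma contD k : forall i,
  M i k.+1 * M (i+1) k.+1 - M i k.+2 * M (i+1) k = (- c) ^+ k.+1.
Proof.
elim: k => [|k IH] i.
  rewrite /=; have -> : i + 1%:Z = i + 1 by []. ring.
rewrite (contS (i+1) k) (contS i k.+1) exprS -(IH i).
have -> : i + 1 + k.+1%:Z = i + k.+2%:Z by lia.
ring.
Qed.

End S.

Lemma key (K : fieldType) (c : K) (x : int -> K) (n : nat) b k :
  c != 0 -> admissible c n x ->
  cont c x (b+2) k = cont c x (b+1) k.+1 * cont c x (b+2) n / cont c x (b+1) n.+1
     + cont c x b k.+2 / c.
Proof.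
move=> c0 adm.
have tn0 : cont c x (b+1) n.+1 != 0.
  apply/eqP => E; have := @contD K c x n (b+1); rewrite E adm !mul0r subr0.
  move/eqP; rewrite eq_sym expf_eq0 oppr_eq0 (negbTE c0) andbF //.
have := adm b; rewrite contL => A.
have -> : cont c x (b + 2) n = - (x b * cont c x (b+1) n.+1) / c.
  have H : c * cont c x (b + 2) n = - (x b * cont c x (b+1) n.+1).
    by apply/eqP; rewrite -subr_eq0 opprK addrC A.
  by rewrite -H [c * _]mulrC mulfK.
rewrite contL; field; apply/andP; split => //.
Qed.


Lemma per (K : fieldType) (c : K) (x : int -> K) (n : nat) :
  c != 0 -> admissible c n x ->
  forall a (j : int), cont c x (a + 2 * j) n.+1 = cont c x a n.+1.
Proof.
move=> c0 adm.
have step : forall a, cont c x (a + 2) n.+1 = cont c x a n.+1.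
  move=> a.
  have D1 := @contD K c x n a; have D2 := @contD K c x n (a+1).
  rewrite adm mul0r subr0 in D1; rewrite adm mul0r subr0 in D2.
  have nz : cont c x (a+1) n.+1 != 0.
    apply/eqP => E; move: D1; rewrite E mulr0 => /eqP; rewrite eq_sym expf_eq0 oppr_eq0 (negbTE c0) andbF //.
  apply: (mulIf nz); rewrite D1 -D2 mulrC.
  by have -> : a + 1 + 1 = a + 2 by rewrite -addrA.
have pos : forall a (m : nat), cont c x (a + 2 * m%:Z) n.+1 = cont c x a n.+1.
  move=> a; elim=> [|m IH]; first by rewrite mulr0 addr0.
  have -> : a + 2 * m.+1%:Z = (a + 2 * m%:Z) + 2 by lia.
  by rewrite step IH.
move=> a [m|m]; first exact: pos.
rewrite -(pos (a + 2 * Negz m) m.+1); congr cont; rewrite NegzE; lia.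
Qed.

Theorem mainTheorem9 (K : fieldType) (c : K) (n : nat) (f : int -> int -> K) :
  c != 0 -> (1 <= n)%N -> is_frieze c n f ->
  let s := f 0 n%:Z in
  let t := f 1 (n.+1)%:Z in
  forall (k : nat) (i : int), (k <= n)%N ->
    f (2 * i) (2 * i + k%:Z - 1)
      = f (2 * i - 1) (2 * i + k%:Z - 1) * f (2 * i) (2 * i + n%:Z - 1) / t
        + f (2 * i - 2) (2 * i + k%:Z - 1) / c
    /\
    f (2 * i + 1) (2 * i + k%:Z)
      = f (2 * i) (2 * i + k%:Z) * f (2 * i + 1) (2 * i + n%:Z) / s
        + f (2 * i - 1) (2 * i + k%:Z) / c.
Proof.
move=> c0 n1 [x [adm hf]] s t k i kn.
have fv : forall a b (m : nat), inB n a b -> b - a + 1 = m%:Z -> f a b = cont c x a m.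
  by move=> a b m H E; rewrite hf // E.
have hs : s = cont c x (2 * i) n.+1.
  rewrite /s (fv _ _ n.+1); first by rewrite -(@per K c x n c0 adm 0 i) add0r.
    by rewrite /inB; lia.
  lia.
have ht : t = cont c x (2 * i - 2 + 1) n.+1.
  rewrite /t (fv _ _ n.+1); first by rewrite -(@per K c x n c0 adm 1 (i - 1)); congr cont; lia.
    by rewrite /inB; lia.
  lia.
split.
- rewrite (fv (2*i) (2*i+k%:Z-1) k) ?(fv (2*i-1) (2*i+k%:Z-1) k.+1) ?(fv (2*i) (2*i+n%:Z-1) n) ?(fv (2*i-2) (2*i+k%:Z-1) k.+2) ?ht; rewrite ?/inB; try lia.
  have := @key K c x n (2 * i - 2) k c0 adm.
  have -> : 2 * i - 2 + 2 = 2 * i by lia.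
  have -> : 2 * i - 2 + 1 = 2 * i - 1 by lia.
  by [].
- rewrite (fv (2*i+1) (2*i+k%:Z) k) ?(fv (2*i) (2*i+k%:Z) k.+1) ?(fv (2*i+1) (2*i+n%:Z) n) ?(fv (2*i-1) (2*i+k%:Z) k.+2) ?hs; rewrite ?/inB; try lia.
  have := @key K c x n (2 * i - 1) k c0 adm.
  have -> : 2 * i - 1 + 2 = 2 * i + 1 by lia.
  have -> : 2 * i - 1 + 1 = 2 * i by lia.
  by [].
Qed.
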